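(* Let $\mathcal{T}$ be a $\operatorname{Hom}$-finite Krull–Schmidt triangulated category over an algebraically closed field, and let $(\mathcal{I},\mathcal{R})$ be an ideal torsion pair in $\mathcal{T}$. Then (1) $\mathcal{I}=\mathrm{CoGh}_{\mathcal{R}}$ and $\mathcal{R}=\mathrm{Gh}_{\mathcal{I}}$; (2) $\mathcal{I}$ is contravariantly finite and $\mathcal{R}$ is covariantly finite.
   Context: Composition of $f:X\to Y$, $g:Y\to Z$ is $gf$. An ideal: subgroups $\mathcal{I}(X,Y)\subseteq\operatorname{Hom}(X,Y)$ closed under composition with arbitrary morphisms. $\mathrm{Gh}_{\mathcal{I}}=\{f: fi=0\text{ for all composable } i\in\mathcal{I}\}$, $\mathrm{CoGh}_{\mathcal{I}}=\{f: if=0\text{ for all composable } i\in\mathcal{I}\}$. A pair $(\mathcal{I},\mathcal{R})$ of ideals is an ideal torsion pair if (a) for all $i:S\to T$ in $\mathcal{I}$ and $r:U\to V$ in $\mathcal{R}$, $rgi=0$ for every $g:T\to U$; and (b) for each $T\in\mathcal{T}$ there is a triangle $X\xrightarrow{f}T\xrightarrow{g}Y\to X[1]$ with $f\in\mathcal{I}$ and $g\in\mathcal{R}$. $\mathcal{I}$ is contravariantly (resp. covariantly) finite if every object has a right (resp. left) $\mathcal{I}$-approximation, where a right $\mathcal{I}$-approximation of $T$ is $i:X\to T$ in $\mathcal{I}$ through which every morphism of $\mathcal{I}$ ending at $T$ factors, and left approximations are dual. *)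

(* Defs.v *)
(* Hom-finite k-linear categories: Hom spaces are
   finite-dimensional k-vector spaces (vectType k). *)
From HB Require Import structures.
From mathcomp Require Import all_boot all_order all_algebra.
Set Implicit Arguments. Unset Strict Implicit. Unset Printing Implicit Defensive.
Import GRing.Theory.
Local Open Scope ring_scope.

Record hfcat (k : fieldType) := HFCat {
  Obj : Type;
  Mor : Obj -> Obj -> vectType k;
  idm : forall X, Mor X X;
  comp : forall X Y Z, Mor Y Z -> Mor X Y -> Mor X Z;
  compA : forall X Y Z W (f : Mor X Y) (g : Mor Y Z) (h : Mor Z W),
      comp h (comp g f) = comp (comp h g) f;
  comp_idl : forall X Y (f : Mor X Y), comp (idm Y) f = f;
  comp_idr : forall X Y (f : Mor X Y), comp f (idm X) = f;
  comp_linl : forall X Y Z (f : Mor X Y) (a : k) (g g' : Mor Y Z),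
      comp (a *: g + g') f = a *: comp g f + comp g' f;
  comp_linr : forall X Y Z (g : Mor Y Z) (a : k) (f f' : Mor X Y),
      comp g (a *: f + f') = a *: comp g f + comp g f'
}.
Arguments Obj {k} _.
Arguments Mor {k} _ _ _.
Arguments idm {k _} X.
Arguments comp {k _ X Y Z} _ _.

Section CatDefs.
Variables (k : fieldType) (C : hfcat k).

Definition is_iso (X Y : Obj C) (f : Mor C X Y) : Prop :=
  exists g : Mor C Y X, comp g f = idm X /\ comp f g = idm Y.

Definition is_zero_obj (Z : Obj C) : Prop := idm Z = 0.

Definition is_biproduct (X Y S : Obj C) (i1 : Mor C X S) (i2 : Mor C Y S)
    (p1 : Mor C S X) (p2 : Mor C S Y) : Prop :=
  [/\ comp p1 i1 = idm X, comp p2 i2 = idm Y, comp p1 i2 = 0, comp p2 i1 = 0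
    & comp i1 p1 + comp i2 p2 = idm S].

Definition additive : Prop :=
  (exists Z, is_zero_obj Z) /\
  forall X Y, exists S i1 i2 p1 p2, @is_biproduct X Y S i1 i2 p1 p2.

Definition local_end (Y : Obj C) : Prop :=
  idm Y <> 0 /\ forall e : Mor C Y Y, is_iso e \/ is_iso (idm Y - e).

Definition krull_schmidt : Prop :=
  forall X : Obj C, exists (n : nat) (Xs : 'I_n -> Obj C)
    (e : forall i, Mor C (Xs i) X) (p : forall i, Mor C X (Xs i)),
    [/\ forall i, local_end (Xs i),
        forall i, comp (p i) (e i) = idm (Xs i),
        forall i j, i != j -> comp (p i) (e j) = 0
      & \sum_(i < n) comp (e i) (p i) = idm X].

End CatDefs.

Record tridata (k : fieldType) := TriData {
  tcat : hfcat k;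
  shO : Obj tcat -> Obj tcat;
  shM : forall X Y, Mor tcat X Y -> Mor tcat (shO X) (shO Y);
  dist : forall X Y Z, Mor tcat X Y -> Mor tcat Y Z -> Mor tcat Z (shO X) -> Prop
}.
Arguments tcat {k} _.
Arguments shO {k} _ _.
Arguments shM {k _ X Y} _.
Arguments dist {k _ X Y Z} _ _ _.

Section Triangulated.
Variables (k : fieldType) (T : tridata k).
Local Notation C := (tcat T).
Local Notation O := (Obj C).
Local Notation H := (Mor C).

Definition shift_autoequiv : Prop :=
  [/\ forall X Y (a : k) (f g : H X Y), shM (a *: f + g) = a *: shM f + shM g,
      forall X, shM (idm X) = idm (shO T X),
      forall X Y Z (f : H X Y) (g : H Y Z), shM (comp g f) = comp (shM g) (shM f),
      forall X Y, bijective (@shM k T X Y)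
    & forall Y : O, exists X (f : H (shO T X) Y), is_iso f].

Definition TR1 : Prop :=
  [/\
      forall X Y Z X' Y' Z' (u : H X Y) (v : H Y Z) (w : H Z (shO T X))
        (u' : H X' Y') (v' : H Y' Z') (w' : H Z' (shO T X'))
        (a : H X X') (b : H Y Y') (c : H Z Z'),
        dist u v w -> is_iso a -> is_iso b -> is_iso c ->
        comp u' a = comp b u -> comp v' b = comp c v ->
        comp w' c = comp (shM a) w -> dist u' v' w',
      forall X Z (v : H X Z) (w : H Z (shO T X)),
        is_zero_obj Z -> dist (idm X) v w
    &
      forall X Y (u : H X Y), exists Z (v : H Y Z) (w : H Z (shO T X)),
        dist u v w].

Definition TR2 : Prop :=
  forall X Y Z (u : H X Y) (v : H Y Z) (w : H Z (shO T X)),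
    dist u v w <-> dist v w (- shM u).

Definition TR3 : Prop :=
  forall X Y Z X' Y' Z' (u : H X Y) (v : H Y Z) (w : H Z (shO T X))
    (u' : H X' Y') (v' : H Y' Z') (w' : H Z' (shO T X'))
    (a : H X X') (b : H Y Y'),
    dist u v w -> dist u' v' w' -> comp u' a = comp b u ->
    exists c : H Z Z', comp v' b = comp c v /\ comp w' c = comp (shM a) w.

Definition TR4 : Prop :=
  forall X Y Z Z' X' Y' (u : H X Y) (v : H Y Z)
    (j : H Y Z') (kk : H Z' (shO T X))
    (l : H Z X') (i : H X' (shO T Y))
    (m : H Z Y') (n : H Y' (shO T X)),
    dist u j kk -> dist v l i -> dist (comp v u) m n ->
    exists (f : H Z' Y') (g : H Y' X'),
      [/\ dist f g (comp (shM j) i),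
          comp f j = comp m v, comp n f = kk,
          comp g m = l & comp (shM u) n = comp i g].

Definition triangulated : Prop :=
  [/\ additive C, shift_autoequiv, TR1, TR2 & (TR3 /\ TR4)].

Definition ideal (I : forall X Y : O, H X Y -> Prop) : Prop :=
  [/\ forall X Y, I X Y 0,
      forall X Y (f g : H X Y), I X Y f -> I X Y g -> I X Y (f - g)
    & forall W X Y Z (a : H W X) (f : H X Y) (b : H Y Z),
        I X Y f -> I W Z (comp b (comp f a))].

Definition Gh (I : forall X Y : O, H X Y -> Prop) X Y (f : H X Y) : Prop :=
  forall W (i : H W X), I W X i -> comp f i = 0.

Definition CoGh (I : forall X Y : O, H X Y -> Prop) X Y (f : H X Y) : Prop :=
  forall Z (i : H Y Z), I Y Z i -> comp i f = 0.

Definition ideal_torsion_pair (I R : forall X Y : O, H X Y -> Prop) : Prop :=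
  [/\ ideal I, ideal R,
      forall S T' U V (i : H S T') (r : H U V) (g : H T' U),
        I S T' i -> R U V r -> comp r (comp g i) = 0
    & forall T' : O, exists X Y (f : H X T') (g : H T' Y) (h : H Y (shO T X)),
        [/\ I X T' f, R T' Y g & dist f g h]].

Definition contravariantly_finite (I : forall X Y : O, H X Y -> Prop) : Prop :=
  forall T' : O, exists X (i : H X T'), I X T' i /\
    forall S (j : H S T'), I S T' j -> exists h : H S X, j = comp i h.

Definition covariantly_finite (R : forall X Y : O, H X Y -> Prop) : Prop :=
  forall T' : O, exists Y (r : H T' Y), R T' Y r /\
    forall U (j : H T' U), R T' U j -> exists h : H Y U, j = comp h r.

End Triangulated.

(* Main.v *)
Require Import Defs.
From mathcomp Require Import all_boot all_order all_algebra.
Import GRing.Theory.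
Local Open Scope ring_scope.
Local Notation comp := Defs.comp.

Section Aux.
Variables (k : fieldType) (T : tridata k).
Local Notation C := (tcat T).
Local Notation H := (Mor C).

Lemma xx0 (V : zmodType) (x : V) : x = x + x -> x = 0.
Proof. by move/(congr1 (fun t => t - x)); rewrite addrK subrr => ->. Qed.

Lemma comp0l X Y Z (f : H X Y) : comp (0 : H Y Z) f = 0.
Proof. apply: xx0; have := @comp_linl _ _ _ _ Z f 1 0 0; by rewrite !scale1r addr0. Qed.

Lemma comp0r X Y Z (g : H Y Z) : comp g (0 : H X Y) = 0.
Proof. apply: xx0; have := @comp_linr _ _ X _ _ g 1 0 0; by rewrite !scale1r addr0. Qed.

Lemma compNl X Y Z (f : H X Y) (g : H Y Z) : comp (- g) f = - comp g f.
Proof. have := comp_linl f (-1) g 0; by rewrite addr0 comp0l addr0 !scaleN1r. Qed.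

Lemma compNr X Y Z (f : H X Y) (g : H Y Z) : comp g (- f) = - comp g f.
Proof. have := comp_linr g (-1) f 0; by rewrite addr0 comp0r addr0 !scaleN1r. Qed.

Hypothesis Htr : triangulated T.

Lemma shM0 X Y : shM (0 : H X Y) = 0.
Proof.
case: Htr => _ [lin _ _ _ _] _ _ _.
apply: xx0; have := lin X Y 1 0 0; by rewrite !scale1r addr0.
Qed.

Lemma shMN X Y (f : H X Y) : shM (- f) = - shM f.
Proof.
case: Htr => _ [lin _ _ _ _] _ _ _.
have := lin X Y (-1) f 0; by rewrite addr0 shM0 addr0 !scaleN1r.
Qed.

Lemma factor_left X Y Z (a : H X Y) (b : H Y Z) (c : H Z (shO T X))
  W (f : H W Y) : dist a b c -> comp b f = 0 -> exists h : H W X, f = comp a h.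
Proof.
move=> Hd Hbf.
case: Htr => [[[Z0 HZ0] _] [lin shid shc shbij _] [_ tr1b _] tr2 [tr3 _]].
have Ht1 : dist (idm W) (0 : H W Z0) (0 : H Z0 (shO T W)) by apply: tr1b.
move/tr2: Ht1 => Ht1. move/tr2: Hd => Hd.
have [cc [_ Hc]] := tr3 _ _ _ _ _ _ _ _ _ _ _ _ f (0 : H Z0 Z) Ht1 Hd
   (etrans Hbf (esym (comp0l _ _ _ _))).
rewrite shid compNl compNr comp_idr in Hc.
move/oppr_inj: Hc => Hc.
have [g gK Kg] := shbij W X.
exists (g cc).
have e : cc = shM (g cc) by rewrite Kg.
rewrite e -shc in Hc.
have [g2 g2K _] := shbij W Y.
by rewrite -(g2K f) -Hc g2K.
Qed.

Lemma factor_right X Y Z (a : H X Y) (b : H Y Z) (c : H Z (shO T X))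
  W (g : H Y W) : dist a b c -> comp g a = 0 -> exists h : H Z W, g = comp h b.
Proof.
move=> Hd Hga.
case: Htr => [[[Z0 HZ0] _] [lin shid shc shbij _] [_ tr1b _] tr2 [tr3 _]].
have HZ1 : is_zero_obj (shO T Z0).
  by rewrite /is_zero_obj -shid HZ0 shM0.
have Ht : dist (0 : H Z0 W) (idm W) (0 : H W (shO T Z0)).
  by apply/tr2; apply: tr1b.
have [h [Hh _]] := tr3 _ _ _ _ _ _ _ _ _ _ _ _ (0 : H X Z0) g Hd Ht
   (etrans (comp0r _ _ _ _) (esym Hga)).
exists h; by rewrite -Hh comp_idl.
Qed.

End Aux.

Theorem proposition2p5 (k : closedFieldType) (T : tridata k)
  (I R : forall X Y : Obj (tcat T), Mor (tcat T) X Y -> Prop) :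
  triangulated T -> krull_schmidt (tcat T) ->
  ideal_torsion_pair I R ->
  ((forall X Y (f : Mor (tcat T) X Y), I X Y f <-> CoGh R f) /\
   (forall X Y (f : Mor (tcat T) X Y), R X Y f <-> Gh I f)) /\
  (contravariantly_finite I /\ covariantly_finite R).
Proof.
move=> Htr _ [[_ _ Iid] [_ _ Rid] Hort Htri].
have orth S T' U (i : Mor (tcat T) S T') (r : Mor (tcat T) T' U) :
    I S T' i -> R T' U r -> comp r i = 0.
  by move=> Hi Hr; have := Hort _ _ _ _ i r (idm T') Hi Hr; rewrite comp_idl.
split; [split|split].
- move=> X Y f; split.
    by move=> Hf Z i Hi; apply: orth.
  move=> Hf; have [A [B [a [b [c [Ha Hb Hd]]]]]] := Htri Y.
  have [h ->] := @factor_left _ _ Htr _ _ _ _ _ _ _ _ Hd (Hf _ _ Hb).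
  by have := Iid _ _ _ _ h a (idm Y) Ha; rewrite comp_idl.
- move=> X Y f; split.
    by move=> Hf W i Hi; apply: orth.
  move=> Hf; have [A [B [a [b [c [Ha Hb Hd]]]]]] := Htri X.
  have [h ->] := @factor_right _ _ Htr _ _ _ _ _ _ _ _ Hd (Hf _ _ Ha).
  by have := Rid _ _ _ _ (idm X) b h Hb; rewrite comp_idr.
- move=> T'; have [A [B [a [b [c [Ha Hb Hd]]]]]] := Htri T'.
  exists A, a; split => // S j Hj.
  exact: @factor_left _ _ Htr _ _ _ _ _ _ _ _ Hd (orth _ _ _ _ _ Hj Hb).
- move=> T'; have [A [B [a [b [c [Ha Hb Hd]]]]]] := Htri T'.
  exists B, b; split => // U j Hj.
  exact: @factor_right _ _ Htr _ _ _ _ _ _ _ _ Hd (orth _ _ _ _ _ Ha Hj).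
Qed.
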